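(* Let $\Sigma$ be an $N$-fan. The following are equivalent: (i) $\Sigma$ is relatively skeletal complete, i.e. the conic hull of $\bigcup\Sigma$ equals the real span $\langle\Sigma\rangle$ of $\bigcup\Sigma$; (ii) $\mathrm{im}(c)\cap\mathbb{N}^{\Sigma_1}=0$; (iii) the submonoid $D\subseteq A$ generated by $\{\alpha_\rho\mid\rho\in\Sigma_1\}$ satisfies $D\cap(-D)=0$, and $\alpha_\rho\neq0$ for every $\rho\in\Sigma_1$.
   Context: Let $V$ be a real vector space of finite dimension $n$, $N\subseteq V$ a lattice (free $\mathbb{Z}$-submodule of rank $n$ spanning $V$) and $M=\mathrm{Hom}(N,\mathbb{Z})\subseteq V^*$. An $N$-fan is a finite set $\Sigma$ of sharp (containing no line) polyhedral cones in $V$, each the conic hull of a finite subset of $N$, such that every face of a cone of $\Sigma$ lies in $\Sigma$ and the intersection of two cones of $\Sigma$ is a face of each. Let $\Sigma_1$ be the set of rays of $\Sigma$; for $\rho\in\Sigma_1$ let $\rho_N$ be the primitive generator of $N\cap\rho$. Let $c\colon M\to\mathbb{Z}^{\Sigma_1}$, $m\mapsto(m(\rho_N))_\rho$, let $a\colon\mathbb{Z}^{\Sigma_1}\to A$ be its cokernel and $\alpha_\rho=a(\delta_\rho)$ for the standard basis $(\delta_\rho)$. *)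

(* Defs.v *)
From HB Require Import structures.
From mathcomp Require Import all_boot all_order all_algebra.
Set Implicit Arguments. Unset Strict Implicit. Unset Printing Implicit Defensive.
Import Order.TTheory GRing.Theory Num.Theory.
Local Open Scope ring_scope.

(* Conventions: V = 'rV[R]_n (R a real field), the lattice N is the set of
   vectors latt B z = z *m B for z : 'rV[int]_n, where B is an invertible
   matrix (a lattice basis).  M = Hom(N,Z) is identified with 'rV[int]_n through the
   dual basis: m(z) = dot m z. *)

Definition dot (T : comNzRingType) (n : nat) (u v : 'rV[T]_n) : T := (u *m v^T) 0 0.

Definition latt (R : realFieldType) (n : nat) (B : 'M[R]_n) (z : 'rV[int]_n)
  : 'rV[R]_n := map_mx (fun a : int => a%:~R) z *m B.

Definition conic_hull (R : realFieldType) (n : nat) (S : 'rV[R]_n -> Prop)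
  (x : 'rV[R]_n) : Prop :=
  exists (s : seq 'rV[R]_n) (l : 'I_(size s) -> R),
    [/\ forall i : 'I_(size s), S s`_i, forall i, 0 <= l i &
        x = \sum_(i < size s) l i *: s`_i].

Definition lin_span (R : realFieldType) (n : nat) (S : 'rV[R]_n -> Prop)
  (x : 'rV[R]_n) : Prop :=
  exists (s : seq 'rV[R]_n) (l : 'I_(size s) -> R),
    (forall i : 'I_(size s), S s`_i) /\ x = \sum_(i < size s) l i *: s`_i.

Definition gcone (R : realFieldType) (n : nat) (B : 'M[R]_n)
  (G : seq 'rV[int]_n) : 'rV[R]_n -> Prop :=
  conic_hull (fun y => y \in map (latt B) G).

Definition set_eq (R : realFieldType) (n : nat) (C D : 'rV[R]_n -> Prop) : Prop :=
  forall x, C x <-> D x.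

Definition sharp (R : realFieldType) (n : nat) (C : 'rV[R]_n -> Prop) : Prop :=
  forall x, C x -> C (- x) -> x = 0.

Definition is_face (R : realFieldType) (n : nat) (F C : 'rV[R]_n -> Prop) : Prop :=
  exists m : 'rV[R]_n, (forall x, C x -> 0 <= dot m x) /\
    set_eq F (fun x => C x /\ dot m x = 0).

(* an N-fan, given as a finite list of cones, each given by a finite list of
   lattice generators *)
Definition is_fan (R : realFieldType) (n : nat) (B : 'M[R]_n)
  (Sigma : seq (seq 'rV[int]_n)) : Prop :=
  [/\ forall s, s \in Sigma -> sharp (gcone B s),
      forall s, s \in Sigma -> forall F, is_face F (gcone B s) ->
        exists2 t, t \in Sigma & set_eq F (gcone B t) &
      forall s t, s \in Sigma -> t \in Sigma ->
        is_face (fun x => gcone B s x /\ gcone B t x) (gcone B s) /\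
        is_face (fun x => gcone B s x /\ gcone B t x) (gcone B t)].

(* dimension of the cone generated by G = dimension of its linear span
   = rank of the matrix of its generators *)
Definition cone_dim (R : realFieldType) (n : nat) (B : 'M[R]_n)
  (G : seq 'rV[int]_n) : nat :=
  \rank (\matrix_(i < size G, j < n) latt B G`_i 0 j).

Definition primitive_gen (R : realFieldType) (n : nat) (B : 'M[R]_n)
  (C : 'rV[R]_n -> Prop) (u : 'rV[int]_n) : Prop :=
  [/\ C (latt B u), u != 0 &
      forall w : 'rV[int]_n, C (latt B w) -> exists t : nat, w = u *+ t].

Definition rel_skel_complete (R : realFieldType) (n : nat) (B : 'M[R]_n)
  (Sigma : seq (seq 'rV[int]_n)) : Prop :=
  let U := fun x => exists2 s, s \in Sigma & gcone B s x in
  set_eq (conic_hull U) (lin_span U).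

(* rays indexed by 'I_k with primitive generators r i; c : M -> Z^{Sigma_1} *)
Definition cmap (n k : nat) (r : 'I_k -> 'rV[int]_n) (m : 'rV[int]_n)
  : 'rV[int]_k := \row_i dot m (r i).

Definition in_im_c (n k : nat) (r : 'I_k -> 'rV[int]_n) (x : 'rV[int]_k) : Prop :=
  exists m : 'rV[int]_n, x = cmap r m.

Definition nonneg (k : nat) (x : 'rV[int]_k) : Prop := forall i, 0 <= x 0 i.

(* A = coker c = Z^{Sigma_1} / im c ; a x = a y  iff  x - y \in im c *)
Definition coker_eq (n k : nat) (r : 'I_k -> 'rV[int]_n) (x y : 'rV[int]_k) : Prop :=
  in_im_c r (x - y).

Definition delta (k : nat) (i : 'I_k) : 'rV[int]_k := \row_j (i == j)%:R.

Definition cond_ii (n k : nat) (r : 'I_k -> 'rV[int]_n) : Prop :=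
  forall x, in_im_c r x -> nonneg x -> x = 0.

(* (iii) D ∩ (-D) = 0 with D = a(N^{Sigma_1}), and alpha_rho = a(delta_rho) <> 0 *)
Definition cond_iii (n k : nat) (r : 'I_k -> 'rV[int]_n) : Prop :=
  (forall x y, nonneg x -> nonneg y -> coker_eq r x (- y) -> coker_eq r x 0) /\
  (forall i, ~ coker_eq r (delta i) 0).

(* Main.v *)
Require Import Defs.
From HB Require Import structures.
From mathcomp Require Import all_boot all_order all_algebra.
From mathcomp Require Import ring.
From Stdlib Require Import Classical.
Set Implicit Arguments. Unset Strict Implicit. Unset Printing Implicit Defensive.
Import Order.TTheory GRing.Theory Num.Theory.
Local Open Scope ring_scope.

Section Gen.
Variable F : realFieldType.
Variable n : nat.
Local Notation V := 'rV[F]_n.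

Lemma dotE (u v : V) : dot u v = \sum_j u 0 j * v 0 j.
Proof. by rewrite /dot !mxE; apply eq_bigr => j _; rewrite mxE. Qed.

Lemma dotC (u v : V) : dot u v = dot v u.
Proof. by rewrite !dotE; apply eq_bigr => j _; rewrite mulrC. Qed.

Lemma dotDr (u v w : V) : dot u (v + w) = dot u v + dot u w.
Proof. by rewrite !dotE -big_split; apply eq_bigr => j _; rewrite mxE mulrDr. Qed.

Lemma dotZr (u v : V) c : dot u (c *: v) = c * dot u v.
Proof. by rewrite !dotE mulr_sumr; apply eq_bigr => j _; rewrite mxE mulrCA. Qed.

Lemma dot0r (u : V) : dot u 0 = 0.
Proof. by rewrite dotE big1 // => j _; rewrite mxE mulr0. Qed.

Lemma dotNr (u v : V) : dot u (- v) = - dot u v.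
Proof. by rewrite -scaleN1r dotZr mulN1r. Qed.

Lemma dotBr (u v w : V) : dot u (v - w) = dot u v - dot u w.
Proof. by rewrite dotDr dotNr. Qed.

Lemma dotDl (u v w : V) : dot (v + w) u = dot v u + dot w u.
Proof. by rewrite dotC dotDr !(dotC u). Qed.

Lemma dotZl (u v : V) c : dot (c *: v) u = c * dot v u.
Proof. by rewrite dotC dotZr dotC. Qed.

Lemma dotNl (u v : V) : dot (- v) u = - dot v u.
Proof. by rewrite dotC dotNr dotC. Qed.

Lemma dotBl (u v w : V) : dot (v - w) u = dot v u - dot w u.
Proof. by rewrite dotDl dotNl. Qed.

Lemma dot_sumr (u : V) I (r : seq I) (P : pred I) (G : I -> V) :
  dot u (\sum_(i <- r | P i) G i) = \sum_(i <- r | P i) dot u (G i).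
Proof. exact: (big_morph (dot u) (dotDr u) (dot0r u)). Qed.

Lemma dot_self_gt0 (b : V) : b != 0 -> 0 < dot b b.
Proof.
move=> nz; rewrite dotE lt_def; apply/andP; split; last first.
  by apply: sumr_ge0 => j _; rewrite -expr2 sqr_ge0.
apply/negP => /eqP /psumr_eq0P H.
move/eqP: nz; apply; apply/rowP => j; rewrite mxE.
have := H (fun i _ => sqr_ge0 (b 0 i)) j isT => /eqP; rewrite -expr2.
by rewrite sqrf_eq0 => /eqP.
Qed.

Fixpoint incone (A : seq V) (b : V) : Prop :=
  match A with
  | [::] => b = 0
  | a :: A' => exists2 c, 0 <= c & incone A' (b - c *: a)
  end.

Lemma incone0 A : incone A 0.
Proof. by elim: A => [|a A IH] //=; exists 0 => //; rewrite scale0r subr0. Qed.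

Lemma inconeD A x y : incone A x -> incone A y -> incone A (x + y).
Proof.
elim: A x y => [|a A IH] x y /=; first by move=> -> ->; rewrite addr0.
move=> [c c0 Hx] [d d0 Hy]; exists (c + d); first exact: addr_ge0.
by have := IH _ _ Hx Hy; rewrite scalerDl opprD addrACA.
Qed.

Lemma inconeZ A x c : 0 <= c -> incone A x -> incone A (c *: x).
Proof.
move=> c0; elim: A x => [|a A IH] x /=; first by move=> ->; rewrite scaler0.
move=> [d d0 Hx]; exists (c * d); first exact: mulr_ge0.
by have := IH _ Hx; rewrite scalerBr scalerA.
Qed.

Lemma incone_mem A u : u \in A -> incone A u.
Proof.
elim: A => [|a A IH] //=; rewrite in_cons => /orP [/eqP ->|/IH Hu].
  by exists 1; rewrite ?ler01 // scale1r subrr; apply: incone0.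
by exists 0; rewrite // scale0r subr0.
Qed.

Lemma incone_trans A A' x :
  (forall u, u \in A -> incone A' u) -> incone A x -> incone A' x.
Proof.
elim: A x => [|a A IH] x HA /=; first by move=> ->; apply: incone0.
move=> [c c0 Hx].
have -> : x = (x - c *: a) + c *: a by rewrite subrK.
apply: inconeD.
  by apply: IH => // u Hu; apply: HA; rewrite in_cons Hu orbT.
by apply: inconeZ => //; apply: HA; rewrite mem_head.
Qed.

Lemma incone_dot_ge0 (y : V) A x :
  (forall u, u \in A -> 0 <= dot y u) -> incone A x -> 0 <= dot y x.
Proof.
elim: A x => [|a A IH] x HA /=; first by move=> ->; rewrite dot0r.
move=> [c c0 Hx].
have -> : x = (x - c *: a) + c *: a by rewrite subrK.
rewrite dotDr dotZr; apply: addr_ge0.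
  by apply: IH => // u Hu; apply: HA; rewrite in_cons Hu orbT.
by apply: mulr_ge0 => //; apply: HA; rewrite mem_head.
Qed.

Lemma incone_sum A I (r : seq I) (G : I -> V) :
  (forall i, incone A (G i)) -> incone A (\sum_(i <- r) G i).
Proof.
move=> HG; apply: (big_ind (incone A)) => //; first exact: incone0.
exact: inconeD.
Qed.

Lemma incone_opp A x : incone A x -> incone (map -%R A) (- x).
Proof.
elim: A x => [|a A IH] x /=; first by move=> ->; rewrite oppr0.
move=> [c c0 Hx]; exists c => //.
by have := IH _ Hx; rewrite scalerN opprB opprK addrC.
Qed.

Lemma incone_mid A B h x :
  incone (A ++ h :: B) x <-> exists2 c, 0 <= c & incone (A ++ B) (x - c *: h).
Proof.
elim: A x => [|a A IH] x //=; split.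
  move=> [c c0 /IH [d d0 H]]; exists d => //; exists c => //.
  by rewrite addrAC.
move=> [d d0 [c c0 H]]; exists c => //; apply/IH; exists d => //.
by rewrite addrAC.
Qed.

Lemma incone_idx A x :
  incone A x <-> exists l : 'I_(size A) -> F,
     (forall i, 0 <= l i) /\ x = \sum_(i < size A) l i *: A`_i.
Proof.
elim: A x => [|a A IH] x /=.
  split; first by move=> ->; exists (fun _ => 0); split=> //; rewrite big_ord0.
  by move=> [l [_ ->]]; rewrite big_ord0.
split.
  move=> [c c0 /IH [l [l0 Hl]]].
  exists (fun i => if unlift ord0 i is Some j then l j else c); split.
    by move=> i; case: (unlift ord0 i).
  rewrite big_ord_recl unlift_none /=.
  under eq_bigr => j _ do rewrite liftK /=.
  by rewrite -Hl addrC subrK.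
move=> [l [l0 ->]]; exists (l ord0) => //; apply/IH.
exists (fun j => l (lift ord0 j)); split; first by move=> j; apply: l0.
by rewrite big_ord_recl /= addrAC subrr add0r.
Qed.

Lemma farkas A b : ~ incone A b ->
  exists y : V, (forall u, u \in A -> 0 <= dot y u) /\ dot y b < 0.
Proof.
move: {2}(size A) (erefl (size A)) => k; elim: k A b => [|k IH] A b.
  case: A => // _ /= nb; exists (- b); split=> //.
  rewrite dotC dotNr oppr_lt0; apply: dot_self_gt0; apply/eqP => hb; exact: nb.
case: A => // a A [sA] nin.
have ninA : ~ incone A b.
  by move=> H; apply: nin; exists 0; rewrite // scale0r subr0.
have [y [yA yb]] := IH A b sA ninA.
have [ya|ya] := leP 0 (dot y a).
  exists y; split=> // u; rewrite in_cons => /orP [/eqP ->|]; [done|exact: yA].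
pose P := fun v : V => v - (dot y v / dot y a) *: a.
have key : forall (L : seq V) x, {subset L <= A} -> incone (map P L) x ->
    exists2 d, d <= 0 & incone L (x + d *: a).
  elim=> [|a1 L IHL] x sL /=; first by move=> ->; exists 0; rewrite ?scale0r ?addr0.
  move=> [c c0 H].
  have [d d0 Hd] := IHL _ (fun u Hu => sL u (@mem_behead _ (a1 :: L) u Hu)) H.
  have ya1 : 0 <= dot y a1 by apply: yA; apply: sL; rewrite mem_head.
  exists (d + c * (dot y a1 / dot y a)).
    rewrite -(addr0 0) lerD //; apply: mulr_ge0_le0 => //.
    by apply: mulr_ge0_le0 => //; rewrite ltW // invr_lt0.
  exists c => //.
  suff -> : x + (d + c * (dot y a1 / dot y a)) *: a - c *: a1 =
            x - c *: P a1 + d *: a by [].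
  by apply/rowP => j; rewrite /P !mxE; ring.
have nin' : ~ incone (map P A) (P b).
  move=> H; have [d d0 Hd] := key A (P b) (fun u h => h) H.
  apply: nin; exists (dot y b / dot y a - d).
    rewrite -(addr0 0) lerD ?oppr_ge0 //.
    by rewrite ltW // -mulrNN -invrN divr_gt0 // oppr_gt0.
  suff -> : b - (dot y b / dot y a - d) *: a = P b + d *: a by [].
  by apply/rowP => j; rewrite /P !mxE; ring.
have szP : size (map P A) = k by rewrite size_map.
have [z [zA zb]] := IH (map P A) (P b) szP nin'.
have yan : dot y a != 0 by rewrite lt_eqF.
have Ew : forall v, dot (z - (dot z a / dot y a) *: y) v = dot z (P v).
  move=> v; rewrite /P dotBl dotZl dotBr dotZr (dotC z a) (dotC y v).
  rewrite (dotC z v) (dotC y a); field; by rewrite dotC.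
exists (z - (dot z a / dot y a) *: y); split; last by rewrite Ew.
move=> u; rewrite in_cons => /orP [/eqP ->|uA]; rewrite Ew.
  by rewrite /P divff // scale1r subrr dot0r.
by apply: zA; apply: map_f.
Qed.

Lemma conic_hullP (S : V -> Prop) x :
  conic_hull S x <-> exists A, (forall u, u \in A -> S u) /\ incone A x.
Proof.
split.
  move=> [A [l [SA l0 Ex]]]; exists A; split.
    move=> u uA; have iA : (index u A < size A)%N by rewrite index_mem.
    by have := SA (Ordinal iA); rewrite /= nth_index.
  by apply/incone_idx; exists l.
move=> [A [SA /incone_idx [l [l0 Ex]]]]; exists A, l; split=> //.
by move=> i; apply: SA; apply: mem_nth.
Qed.

Lemma conic_memP (A0 : seq V) x :
  conic_hull (fun y => y \in A0) x <-> incone A0 x.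
Proof.
rewrite conic_hullP; split; last by move=> H; exists A0.
move=> [A [SA H]]; apply: incone_trans H => u /SA; exact: incone_mem.
Qed.

Lemma combine (Q : V -> Prop) (L : seq V) :
  Q 0 -> (forall a b, Q a -> Q b -> Q (a + b)) ->
  (forall y w, Q y -> w \in L -> 0 <= dot y w) ->
  (forall w, w \in L -> exists y, Q y /\ 0 < dot y w) ->
  exists m, Q m /\ forall w, w \in L -> 0 < dot m w.
Proof.
move=> Q0 QD Qp Hw.
suff : forall L0 : seq V, {subset L0 <= L} -> exists m, Q m /\ forall w, w \in L0 -> 0 < dot m w.
  by move/(_ L (fun u h => h)).
elim=> [|a L0 IH] sL; first by exists 0; split.
have [m [Qm Hm]] := IH (fun u h => sL u (@mem_behead _ (a :: L0) u h)).
have aL : a \in L by apply: sL; rewrite mem_head.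
have [y [Qy Hy]] := Hw a aL.
exists (m + y); split; first exact: QD.
move=> w; rewrite in_cons dotDl => /orP [/eqP ->|wL0].
  by rewrite ltr_wpDl // Qp.
by rewrite ltr_pwDl ?Hm // Qp //; apply: sL; rewrite in_cons wL0 orbT.
Qed.

Lemma zero_on_pos (m : V) L z :
  (forall u, u \in L -> 0 < dot m u) -> incone L z -> dot m z = 0 -> z = 0.
Proof.
elim: L z => [|a L IH] z HL /=; first by [].
move=> [c c0 Hz] mz.
have HL' : forall u, u \in L -> 0 < dot m u.
  by move=> u uL; apply: HL; rewrite in_cons uL orbT.
have ge1 : 0 <= dot m (z - c *: a).
  by apply: (incone_dot_ge0 (A := L)) => // u /HL' /ltW.
have ma : 0 < dot m a by apply: HL; rewrite mem_head.
have ge2 : 0 <= c * dot m a by rewrite mulr_ge0 // ltW.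
have : dot m (z - c *: a) + c * dot m a = 0 by rewrite dotBr dotZr subrK.
move/eqP; rewrite paddr_eq0 // => /andP [/eqP e1 /eqP e2].
move: e2 => /eqP; rewrite mulf_eq0 (gt_eqF ma) orbF => /eqP c00.
by move: Hz e1; rewrite c00 scale0r subr0; apply: IH.
Qed.

End Gen.

Section K2.
Variable R : realFieldType.
Variable n : nat.
Variable B : 'M[R]_n.
Variable Sigma : seq (seq 'rV[int]_n).
Variable k : nat.
Variable r : 'I_k -> 'rV[int]_n.
Hypothesis Bu : B \in unitmx.
Hypothesis fan : is_fan B Sigma.
Hypothesis H5 : forall s, s \in Sigma -> cone_dim B s = 1%N ->
     exists i, primitive_gen B (gcone B s) (r i).
Local Notation V := 'rV[R]_n.

Lemma mem_split (T : eqType) (s : seq T) x : x \in s -> exists A C, s = A ++ x :: C.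
Proof. by case/splitPr => A C; exists A, C. Qed.

Definition Rays : seq V := [seq latt B (r i) | i <- enum 'I_k].

Lemma gconeP s x : gcone B s x <-> incone (map (latt B) s) x.
Proof. exact: conic_memP. Qed.

Lemma latt_eq0 z : latt B z = 0 -> z = 0.
Proof.
move=> h; have : map_mx (fun a : int => a%:~R) z = 0 :> V.
  by rewrite -(mulmxK Bu (map_mx _ z)); rewrite /latt in h; rewrite h mul0mx.
move=> /rowP h2; apply/rowP => j; have := h2 j; rewrite !mxE.
by move=> e; apply: (@intr_inj R); rewrite e.
Qed.

Lemma ray_in_Rays (t : seq 'rV[int]_n) (v : V) :
  t \in Sigma -> v != 0 ->
  (forall x, gcone B t x <-> exists2 c, 0 <= c & x = c *: v) ->
  incone Rays v.
Proof.
move=> tS vn Ht.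
have dim1 : cone_dim B t = 1%N.
  rewrite /cone_dim; set M := \matrix_(i < size t, j < n) _.
  have rowM : forall i, row i M = latt B t`_i.
    by move=> i; apply/rowP => j; rewrite !mxE.
  apply/eqP; rewrite eqn_leq; apply/andP; split.
    apply: (leq_trans (mxrankS (_ : (M <= v)%MS))); last exact: rank_leq_row.
    apply/row_subP => i; apply/sub_rVP; rewrite rowM.
    have : gcone B t (latt B t`_i).
      by apply/gconeP; apply: incone_mem; apply: map_f; apply: mem_nth.
    by move/Ht => [c _ ->]; exists c.
  rewrite lt0n mxrank_eq0; apply/negP => /eqP M0.
  have : gcone B t v by apply/Ht; exists 1; rewrite ?ler01 ?scale1r.
  move/gconeP => Hv; move/eqP: vn; apply.
  have : incone [::] v; last by [].
  apply: incone_trans Hv => u /mapP [z zt ->] /=.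
  have iz : (index z t < size t)%N by rewrite index_mem.
  by have := rowM (Ordinal iz); rewrite M0 /= nth_index // row0 => <-.
have [i [ri rn _]] := H5 tS dim1.
move: ri => /Ht [c c0 Ec].
have cn : c != 0.
  apply/eqP => c00; move: Ec; rewrite c00 scale0r => /latt_eq0 h.
  by move/eqP: rn.
have -> : v = c^-1 *: latt B (r i) by rewrite Ec scalerA mulVf // scale1r.
apply: inconeZ; first by rewrite invr_ge0.
by apply: incone_mem; apply: map_f; rewrite mem_enum.
Qed.

Lemma K2 s : s \in Sigma -> forall x, gcone B s x -> incone Rays x.
Proof.
move=> sS.
have [fsharp fface _] := fan.
have shC := fsharp s sS.
suff main : forall m (H : seq V), (size H <= m)%N ->
    (forall x, gcone B s x <-> incone H x) ->
    forall v, v \in H -> incone Rays v.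
  move=> x /gconeP Hx; apply: incone_trans Hx.
  by apply: (main _ _ (leqnn _)) => y; apply: gconeP.
elim=> [|m IH] H sH HC.
  by move: sH; rewrite leqn0 => /eqP /size0nil -> .
case: (classic (exists A h B', H = A ++ h :: B' /\ incone (A ++ B') h)).
  move=> [A [h [B' [EH hin]]]].
  have HC' : forall x, gcone B s x <-> incone (A ++ B') x.
    move=> x; rewrite HC EH incone_mid; split.
      move=> [c c0 Hx]; have -> : x = (x - c *: h) + c *: h by rewrite subrK.
      by apply: inconeD => //; apply: inconeZ.
    by move=> Hx; exists 0; rewrite // scale0r subr0.
  have sH' : (size (A ++ B') <= m)%N.
    by move: sH; rewrite EH !size_cat /= addnS.
  have IH' := IH _ sH' HC'.
  move=> v; rewrite EH mem_cat in_cons => /or3P [vA|/eqP ->|vB].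
  - by apply: IH'; rewrite mem_cat vA.
  - by apply: incone_trans hin.
  - by apply: IH'; rewrite mem_cat vB orbT.
move=> nred v vH.
have nonred : forall A h B', H = A ++ h :: B' -> ~ incone (A ++ B') h.
  by move=> A h B' EH hin; apply: nred; exists A, h, B'.
have nz : forall w, w \in H -> w != 0.
  move=> w /mem_split [A [B' EH]]; apply/eqP => w0.
  by apply: (nonred _ _ _ EH); rewrite w0; apply: incone0.
have shH : forall x, incone H x -> incone H (- x) -> x = 0.
  by move=> x /HC h1 /HC h2; apply: shC.
have vn := nz v vH.
have [A [B' EH]] := mem_split vH.
set H' := A ++ B'.
have H'H : forall x, incone H' x -> incone H x.
  by move=> x hx; rewrite EH incone_mid; exists 0; rewrite // scale0r subr0.
have wH : forall w, w \in H' -> w \in H.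
  by move=> w; rewrite EH !mem_cat in_cons => /orP [->|->]; rewrite ?orbT.
have vHc : incone H v by apply: incone_mem; rewrite EH mem_cat mem_head orbT.
pose Q := fun y : V => dot y v = 0 /\ forall u, u \in H' -> 0 <= dot y u.
have [mm [[mv mH'] mpos]] : exists mm, Q mm /\ forall w, w \in H' -> 0 < dot mm w.
  apply: combine.
  - by split; [rewrite dotC dot0r | move=> u _; rewrite dotC dot0r].
  - move=> a b [av aH] [bv bH]; split; first by rewrite dotDl av bv addr0.
    by move=> u uH; rewrite dotDl addr_ge0 ?aH ?bH.
  - by move=> y w [_ yH] /yH.
  move=> w wH'.
  case: (classic (incone [:: v, - v & H'] (- w))).
    move=> [al al0 [be be0 Hz]]; exfalso.
    set z := (- w - al *: v - be *: - v) in Hz.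
    have wn := nz w (wH w wH').
    have [le|lt] := leP be al.
      have Hmw : incone H (- w).
        have -> : - w = z + (al - be) *: v.
          by apply/rowP => j; rewrite /z !mxE; ring.
        by apply: inconeD; [apply: H'H | apply: inconeZ; rewrite ?subr_ge0].
      move/eqP: wn; apply; apply: shH Hmw; first by apply: H'H; apply: incone_mem.
    apply: (nonred _ _ _ EH).
    have -> : v = (be - al)^-1 *: (z + w).
      apply/rowP => j; rewrite /z !mxE; field.
      by rewrite subr_eq0 gt_eqF.
    apply: inconeZ; first by rewrite invr_ge0 subr_ge0 ltW.
    by apply: inconeD => //; apply: incone_mem.
  move/farkas => [y [yA yb]]; exists y; split; last by move: yb; rewrite dotNr oppr_lt0.
  have y1 := yA v (mem_head _ _).
  have y2 : 0 <= dot y (- v) by apply: yA; rewrite in_cons mem_head orbT.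
  split; first by apply/eqP; rewrite eq_le y1 andbT -oppr_ge0 -dotNr.
  by move=> u uH; apply: yA; rewrite !in_cons uH !orbT.
have mC : forall x, gcone B s x -> 0 <= dot mm x.
  move=> x /HC; apply: incone_dot_ge0 => u; rewrite EH mem_cat in_cons.
  by move=> /or3P [uA|/eqP ->|uB]; rewrite ?mv // ltW // mpos // mem_cat ?uA ?uB ?orbT.
have [t tS Ht] := fface s sS (fun x => gcone B s x /\ dot mm x = 0)
   (ex_intro _ mm (conj mC (fun x => iff_refl _))).
apply: (ray_in_Rays tS vn) => x; rewrite -Ht; split.
  move=> [/HC hx mx]; move: hx; rewrite EH incone_mid => [[c c0 hz]].
  exists c => //; apply/eqP; rewrite -subr_eq0; apply/eqP.
  apply: (zero_on_pos mpos hz).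
  by rewrite dotBr dotZr mv mulr0 subr0.
move=> [c c0 ->]; split; first by apply/HC; apply: inconeZ.
by rewrite dotZr mv mulr0.
Qed.

End K2.

Lemma dot_intr (F : realFieldType) n (m z : 'rV[int]_n) :
  (dot m z)%:~R = dot (map_mx (fun a : int => a%:~R) m) (map_mx (fun a : int => a%:~R) z) :> F.
Proof.
rewrite dotE /dot !mxE (big_morph _ (intrD _) (mulr0z 1)).
by apply: eq_bigr => j _; rewrite !mxE intrM.
Qed.

Lemma clear_den n (y : 'rV[rat]_n) : exists (m : 'rV[int]_n) (d : rat),
  0 < d /\ map_mx (fun a : int => a%:~R) m = d *: y.
Proof.
exists (\row_i (numq (y 0 i) * \prod_(j | j != i) denq (y 0 j))).
exists (\prod_j denq (y 0 j))%:~R; split.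
  by rewrite ltr0z; apply: prodr_gt0 => j _; apply: denq_gt0.
apply/rowP => i; rewrite !mxE [in RHS](bigD1 i) //= !intrM numqE; ring.
Qed.

Lemma cmap0 n k (r : 'I_k -> 'rV[int]_n) : cmap r 0 = 0.
Proof. by apply/rowP => j; rewrite !mxE /dot mul0mx mxE. Qed.

Theorem proposition1p390 (R : realFieldType) (n : nat) (B : 'M[R]_n)
  (Sigma : seq (seq 'rV[int]_n)) (k : nat) (r : 'I_k -> 'rV[int]_n) :
  B \in unitmx ->
  is_fan B Sigma ->
  injective r ->
  (forall i, exists2 s, s \in Sigma &
     cone_dim B s = 1%N /\ primitive_gen B (gcone B s) (r i)) ->
  (forall s, s \in Sigma -> cone_dim B s = 1%N ->
     exists i, primitive_gen B (gcone B s) (r i)) ->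
  [<-> rel_skel_complete B Sigma; cond_ii r; cond_iii r].
Proof.
move=> Bu fan rinj H4 H5.
have K := K2 Bu fan H5.
have rayU : forall i, exists2 s, s \in Sigma & gcone B s (latt B (r i)).
  by move=> i; have [s sS [_ [h _ _]]] := H4 i; exists s.
have ii_iii : cond_ii r -> cond_iii r.
  move=> h; split.
    move=> x y xn yn [m Em].
    have xy0 : x - - y = 0.
      apply: h; first by exists m.
      by move=> i; rewrite !mxE opprK addr_ge0.
    have x0 : x = 0.
      apply/rowP => i; have := congr1 (fun M : 'rV[int]_k => M 0 i) xy0.
      rewrite /= !mxE opprK => /eqP; rewrite paddr_eq0 ?xn ?yn //.
      by case/andP => /eqP.
    by exists 0; rewrite x0 subrr cmap0.
  move=> i [m Em].
  have d0 : delta i = 0.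
    apply: h; first by exists m; rewrite -Em subr0.
    by move=> j; rewrite !mxE ler0n.
  by have := congr1 (fun M : 'rV[int]_k => M 0 i) d0; rewrite /= !mxE eqxx.
have iii_ii : cond_iii r -> cond_ii r.
  move=> [h1 h2] x [m Em] xn; apply/rowP => j; rewrite mxE.
  apply/eqP; rewrite eq_le xn andbT; rewrite leNgt; apply/negP => xj.
  apply: (h2 j); apply: (h1 (delta j) (x - delta j)).
  - by move=> i; rewrite !mxE ler0n.
  - move=> i; rewrite !mxE subr_ge0; case: (eqVneq j i) => [<-|_]; last exact: xn.
    by rewrite -gtz0_ge1.
  - by exists m; rewrite opprK addrC subrK.
have i_ii : rel_skel_complete B Sigma -> cond_ii r.
  move=> hi x [m ->] xn.
  pose w : 'rV[R]_n := map_mx (fun a : int => a%:~R) m *m (invmx B)^T.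
  have Ew : forall z, dot w (latt B z) = (dot m z)%:~R.
    move=> z; rewrite dot_intr /dot /w /latt trmx_mul.
    by rewrite -mulmxA (mulmxA _^T) -trmx_mul mulmxV // trmx1 mul1mx.
  have wU : forall u, (exists2 s, s \in Sigma & gcone B s u) -> 0 <= dot w u.
    move=> u [s sS hu]; apply: (incone_dot_ge0 (A := Rays B r)); last exact: K hu.
    move=> v /mapP [i _ ->]; rewrite Ew ler0z.
    by have := xn i; rewrite mxE.
  apply/rowP => j; rewrite !mxE; apply/eqP; rewrite eq_le.
  have := xn j; rewrite mxE => ->; rewrite andbT.
  have : conic_hull (fun x => exists2 s, s \in Sigma & gcone B s x) (- latt B (r j)).
    apply/hi; exists [:: latt B (r j)], (fun _ => -1); split.
      by move=> i; rewrite (ord1 i) /=; apply: rayU.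
    by rewrite big_ord1 scaleN1r.
  move/conic_hullP => [A [SA HA]].
  have := incone_dot_ge0 (fun u uA => wU u (SA u uA)) HA.
  by rewrite dotNr Ew oppr_ge0 lerz0.
have ii_i : cond_ii r -> rel_skel_complete B Sigma.
  move=> hii.
  pose q := fun z : 'rV[int]_n => map_mx (fun a : int => a%:~R) z : 'rV[rat]_n.
  pose RQ := [seq q (r i) | i <- enum 'I_k].
  have negQ : forall j, incone RQ (- q (r j)).
    move=> j; apply: NNPP => /farkas [y [yA yb]].
    have [m [d [d0 Em]]] := clear_den y.
    have Edm : forall z, (dot m z)%:~R = d * dot y (q z).
      by move=> z; rewrite dot_intr Em dotZl.
    have x0 := hii (cmap r m) (ex_intro _ m erefl).
    have : cmap r m = 0.
      apply: x0 => i; rewrite mxE -(ler0z rat) Edm mulr_ge0 ?(ltW d0) //.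
      by apply: yA; apply: map_f; rewrite mem_enum.
    move=> /rowP /(_ j); rewrite !mxE => /(congr1 (fun a : int => a%:~R : rat)).
    rewrite Edm => /eqP; rewrite mulf_eq0 (gt_eqF d0) /=.
    by move: yb; rewrite dotNr oppr_lt0 => /gt_eqF ->.
  pose phi := fun v : 'rV[rat]_n => map_mx ratr v *m B.
  have phiE : forall z, phi (q z) = latt B z.
    by move=> z; congr (_ *m B); apply/rowP => j; rewrite !mxE ratr_int.
  have phi_cone : forall A x, incone A x -> incone (map phi A) (phi x).
    elim=> [|a A IH] x /=; first by move=> ->; rewrite /phi map_mx0 mul0mx.
    move=> [c c0 hx]; exists (ratr c); first by rewrite ler0q.
    have := IH _ hx; congr incone.
    by rewrite /phi map_mxB map_mxZ mulmxBl scalemxAl.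
  have RQR : map phi RQ = Rays B r.
    by rewrite -map_comp; apply: eq_map => i /=; rewrite phiE.
  have negR : forall j, incone (Rays B r) (- latt B (r j)).
    move=> j; rewrite -RQR -phiE.
    have -> : - phi (q (r j)) = phi (- q (r j)) by rewrite /phi map_mxN mulNmx.
    exact: phi_cone.
  have Rneg : forall u, incone (Rays B r) u -> incone (Rays B r) (- u).
    move=> u /incone_opp; apply: incone_trans => v /mapP [w /mapP [i _ ->] ->].
    exact: negR.
  move=> x; split.
    by move=> [s [l [Ss l0 ->]]]; exists s, l.
  move=> [s [l [Ss ->]]].
  apply/conic_hullP; exists (Rays B r); split.
    by move=> u /mapP [i _ ->]; apply: rayU.
  apply: incone_sum => i.
  have [s0 s0S hs] := Ss i.
  have hsi := K s0 s0S _ hs.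
  have [li|li] := leP 0 (l i); first exact: inconeZ.
  have -> : l i *: s`_i = (- l i) *: (- s`_i) by rewrite scaleNr scalerN opprK.
  apply: inconeZ; last exact: Rneg.
  by rewrite oppr_ge0 ltW.
tfae.
- exact: i_ii.
- exact: ii_iii.
- by move=> h; apply: ii_i; apply: iii_ii.
Qed.
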